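(* Let $N\ge2$, $J\ge2$, $M=\binom N2\binom J2$, and let $\mathbf{A}$ (an $M\times NJ$ matrix), $\mathbf{G}$ (an $NJ\times K$ matrix), $\mathbf{F}=\mathbf{A}\mathbf{G}$, and $\mathbf{d}=\mathbf{A}\mathbf{y}$ be as described in the context, with $E[\mathbf{d}]=\mathbf{F}\boldsymbol\theta$ for the effect vector $\boldsymbol\theta\in\mathbb{R}^K$. Let $\mathbf{v}\in\mathbb{R}^K$ and $\theta_e=\mathbf{v}^T\boldsymbol\theta$. Call a fixed weight vector $\mathbf{w}\in\mathbb{R}^M$ (and the estimator $\hat\theta=\mathbf{w}^T\mathbf{d}$) unbiased for $\theta_e$ if $\mathbf{F}^T\mathbf{w}=\mathbf{v}$, i.e. $E[\mathbf{w}^T\mathbf{d}]=\mathbf{v}^T\boldsymbol\theta$ for every $\boldsymbol\theta\in\mathbb{R}^K$; two weight vectors $\mathbf{w}_1,\mathbf{w}_2$ define the same estimator iff $\mathbf{A}^T\mathbf{w}_1=\mathbf{A}^T\mathbf{w}_2$. Then: (i) if $\operatorname{rank}(\mathbf{F}^T\mid\mathbf{v})>\operatorname{rank}(\mathbf{F}^T)$, there is no estimator of the form $\mathbf{w}^T\mathbf{d}$ that is unbiased for $\theta_e$; (ii) if $\operatorname{rank}(\mathbf{F}^T\mid\mathbf{v})=\operatorname{rank}(\mathbf{F}^T)=M$, there is a unique unbiased estimator of this form, given by the unique $\mathbf{w}$ solving $\mathbf{F}^T\mathbf{w}=\mathbf{v}$; (iii) if $\operatorname{rank}(\mathbf{F}^T\mid\mathbf{v})=\operatorname{rank}(\mathbf{F}^T)<M$,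 there are infinitely many weight vectors $\mathbf{w}$ giving unbiased estimators, and the set of distinct such estimators $\{\mathbf{A}^T\mathbf{w}:\mathbf{F}^T\mathbf{w}=\mathbf{v}\}$ is an affine subspace of $\mathbb{R}^{NJ}$ of dimension $(N-1)(J-1)-\operatorname{rank}(\mathbf{F})$.
   Context: Setting: $N$ units, $J$ periods, fixed treatment indicators $X_{ij}\in\{0,1\}$ with staggered adoption ($X_{ij}\le X_{i,j+1}$), $T_i=\min\{j:X_{ij}=1\}$, units ordered so $T_1\le\dots\le T_N$. $\mathbf{y}\in\mathbb{R}^{NJ}$ lists outcomes $Y_{ij}$ ordered by $i$ then $j$. The rows of $\mathbf{A}$ are indexed by quadruples $(i,i',j,j')$ with $1\le i<i'\le N$, $1\le j<j'\le J$; row $(i,i',j,j')$ has $+1$ in columns $(i,j')$ and $(i',j)$, $-1$ in columns $(i,j)$ and $(i',j')$, and $0$ elsewhere, so $\mathbf{d}$ has entries $D_{i,i',j,j'}=(Y_{ij'}-Y_{ij})-(Y_{i'j'}-Y_{i'j})$. An assumption setting assigns to each treated cell $(i,j)$ ($X_{ij}=1$) a label: S1: $(i,j,j-T_i+1)$; S2: $(j,j-T_i+1)$; S3: $j-T_i+1$; S4: $j$; S5: one common label. $\boldsymbol\theta\in\mathbb{R}^K$ lists the treatment effects for the $K$ distinct labels of treated cells; $\mathbf{G}$ has $((i,j),\ell)$ entry $1$ if $X_{ij}=1$ and cell $(i,j)$ has label $\ell$, $0$ otherwise. $(\mathbf{F}^T\mid\mathbf{v})$ denotes the augmented matrix obtained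 by appending column $\mathbf{v}$ to $\mathbf{F}^T$. *)

(* Defs.v *)
From HB Require Import structures.
From mathcomp Require Import all_boot all_order all_algebra.
From mathcomp Require Import reals.
Set Implicit Arguments. Unset Strict Implicit. Unset Printing Implicit Defensive.
Import Order.TTheory GRing.Theory Num.Theory.
Local Open Scope ring_scope.

(* Treatment indicators: X i j (unit i, period j), 0-based indices. *)
Definition staggered (N J : nat) (X : 'I_N -> 'I_J -> bool) : Prop :=
  forall (i : 'I_N) (j j' : 'I_J), (j <= j')%N -> X i j -> X i j'.

(* Adoption time T_i = first j with X i j (0-based); equals J (i.e. "never")
   if unit i is never treated. *)
Definition adopt (N J : nat) (X : 'I_N -> 'I_J -> bool) (i : 'I_N) : nat :=
  find (fun j : 'I_J => X i j) (enum 'I_J).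

Definition units_ordered (N J : nat) (X : 'I_N -> 'I_J -> bool) : Prop :=
  forall i i' : 'I_N, (i <= i')%N -> (adopt X i <= adopt X i')%N.

Inductive setting := S1 | S2 | S3 | S4 | S5.

(* Label of a (treated) cell, encoded uniformly as a triple of naturals.
   Event time j - T_i + 1 (well defined, >= 1, for treated cells). *)
Definition label (s : setting) (N J : nat) (X : 'I_N -> 'I_J -> bool)
    (i : 'I_N) (j : 'I_J) : nat * nat * nat :=
  let e := (j - adopt X i + 1)%N in
  match s with
  | S1 => (nat_of_ord i, nat_of_ord j, e)
  | S2 => (0%N, nat_of_ord j, e)
  | S3 => (0%N, 0%N, e)
  | S4 => (0%N, nat_of_ord j, 0%N)
  | S5 => (0%N, 0%N, 0%N)
  end.

Definition labels (s : setting) (N J : nat) (X : 'I_N -> 'I_J -> bool)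
    : seq (nat * nat * nat) :=
  undup [seq label s X c.1 c.2 | c <- enum [pred c : 'I_N * 'I_J | X c.1 c.2]].

Definition nK (s : setting) (N J : nat) (X : 'I_N -> 'I_J -> bool) : nat :=
  size (labels s X).

(* Columns of y / rows of G: cell (i,j) sits at index mxvec_index i j,
   i.e. ordered by i then j. *)
Definition Gmx (R : realType) (s : setting) (N J : nat)
    (X : 'I_N -> 'I_J -> bool) : 'M[R]_(N * J, nK s X) :=
  \matrix_(c, l)
    (if [exists i : 'I_N, exists j : 'I_J,
           [&& c == mxvec_index i j, X i j
             & label s X i j == nth (0%N, 0%N, 0%N) (labels s X) l]]
     then 1 else 0).

Definition quad (N J : nat) :=
  {q : 'I_N * 'I_N * 'I_J * 'I_J | (q.1.1.1 < q.1.1.2)%N && (q.1.2 < q.2)%N}.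

(* M = number of quadruples (= binom(N,2) * binom(J,2)); rows of A are
   indexed by the quadruples through enum_val. *)
Definition nM (N J : nat) : nat := #|{: quad N J}|.

Definition Amx (R : realType) (N J : nat) : 'M[R]_(nM N J, N * J) :=
  \matrix_(r, c)
    (let q := val (enum_val r) in
     let i := q.1.1.1 in let i' := q.1.1.2 in let j := q.1.2 in let j' := q.2 in
     (c == mxvec_index i j')%:R + (c == mxvec_index i' j)%:R
     - (c == mxvec_index i j)%:R - (c == mxvec_index i' j')%:R).

Definition Fmx (R : realType) (s : setting) (N J : nat)
    (X : 'I_N -> 'I_J -> bool) : 'M[R]_(nM N J, nK s X) :=
  Amx R N J *m Gmx R s X.

Definition unbiased (R : realType) (s : setting) (N J : nat)
    (X : 'I_N -> 'I_J -> bool) (v : 'cV[R]_(nK s X)) (w : 'cV[R]_(nM N J)) : Prop :=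
  (Fmx R s X)^T *m w = v.

(* Main.v *)
Require Import Defs.
From HB Require Import structures.
From mathcomp Require Import all_boot all_order all_algebra.
From mathcomp Require Import reals ring lra zify.
Import Order.TTheory GRing.Theory Num.Theory.
Local Open Scope ring_scope.
Set Implicit Arguments. Unset Strict Implicit.

Section RankA.
Variables (R : realType) (n m : nat).
Local Notation N := n.+1.
Local Notation J := m.+1.

Definition fv (a : 'I_N) (c : 'I_J) : 'rV[R]_(N * J) :=
  \row_col ((col == mxvec_index ord0 c)%:R + (col == mxvec_index a ord0)%:R
     - (col == mxvec_index ord0 ord0)%:R - (col == mxvec_index a c)%:R).

Lemma fv_row r : let q := val (enum_val r) in
  row r (Amx R N J) = fv q.1.1.2 q.2 - fv q.1.1.2 q.1.2 - fv q.1.1.1 q.2 + fv q.1.1.1 q.1.2.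
Proof. move=> q; apply/rowP => col; rewrite !mxE /= /q; ring. Qed.

Lemma fv0l c : fv ord0 c = 0.
Proof. apply/rowP => col; rewrite !mxE; ring. Qed.
Lemma fv0r a : fv a ord0 = 0.
Proof. apply/rowP => col; rewrite !mxE; ring. Qed.

Definition pk (k : 'I_(n * m)) : 'I_n * 'I_m :=
  enum_val (cast_ord (esym (mxvec_cast n m)) k).

Lemma pkE a c : pk (mxvec_index a c) = (a, c).
Proof. by rewrite /pk /mxvec_index cast_ordK enum_rankK. Qed.

Lemma mxvec_index_eq (p q : nat) (a a' : 'I_p) (c c' : 'I_q) :
  (mxvec_index a c == mxvec_index a' c') = (a == a') && (c == c').
Proof.
by rewrite /mxvec_index (inj_eq (@cast_ord_inj _ _ _)) (inj_eq enum_rank_inj) xpair_eqE.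
Qed.

Definition Bm : 'M[R]_(n * m, N * J) :=
  \matrix_(k < n * m) fv (lift ord0 (pk k).1) (lift ord0 (pk k).2).

Lemma fv_sub a c : (fv a c <= Bm)%MS.
Proof.
case: (unliftP ord0 a) => [a'|] ->; last by rewrite fv0l sub0mx.
case: (unliftP ord0 c) => [c'|] ->; last by rewrite fv0r sub0mx.
have -> : fv (lift ord0 a') (lift ord0 c') = row (mxvec_index a' c') Bm.
  by apply/rowP => col; rewrite !mxE pkE.
exact: row_sub.
Qed.

Lemma A_sub_B : (Amx R N J <= Bm)%MS.
Proof.
apply/row_subP => r; rewrite fv_row.
by rewrite !addmx_sub ?(eqmx_opp _) ?fv_sub.
Qed.

Lemma B_sub_A : (Bm <= Amx R N J)%MS.
Proof.
apply/row_subP => k; case/mxvec_indexP: k => a c.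
have qP : ((ord0 : 'I_N) < lift ord0 a)%N && ((ord0 : 'I_J) < lift ord0 c)%N by [].
pose q : quad N J := exist _ (ord0, lift ord0 a, ord0, lift ord0 c) qP.
have -> : row (mxvec_index a c) Bm = row (enum_rank q) (Amx R N J).
  rewrite fv_row enum_rankK /= fv0l fv0r.
  by apply/rowP => col; rewrite !mxE pkE /=; ring.
by apply: (row_sub (enum_rank q : 'I_(nM N J)) (Amx R N J)).
Qed.

Definition Pm : 'M[R]_(N * J, n * m) :=
  \matrix_(col, k) (- (col == mxvec_index (lift ord0 (pk k).1) (lift ord0 (pk k).2))%:R).

Lemma BP : Bm *m Pm = 1%:M.
Proof.
apply/matrixP => k k'; rewrite !mxE.
pose c0 := mxvec_index (lift ord0 (pk k').1) (lift ord0 (pk k').2) : 'I_(N * J).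
rewrite (bigD1 c0) //= big1 => [|col /negbTE H]; last by rewrite !mxE H mulrN mulr0 oppr0.
rewrite !mxE eqxx addr0 mulrN1 /c0; clear c0.
case/mxvec_indexP: k => a c; case/mxvec_indexP: k' => a' c'.
rewrite !pkE /= !mxvec_index_eq.
rewrite !(eq_sym (lift ord0 _) ord0) !(negbTE (neq_lift _ _)) !(inj_eq (@lift_inj _ _)) /=.
rewrite ?andbF ?andFb (eq_sym a') (eq_sym c').
by case: (a == a'); case: (c == c'); rewrite /= ?mulr0n ?mulr1n; ring.
Qed.

Lemma rankA : \rank (Amx R N J) = (n * m)%N.
Proof.
have -> : \rank (Amx R N J) = \rank Bm.
  by apply/eqmx_rank; rewrite A_sub_B B_sub_A.
apply/anti_leq; rewrite rank_leq_row /=.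
by rewrite -{1}(mxrank1 R (n * m)) -BP mxrankM_maxl.
Qed.
End RankA.

Lemma rankA_gen (R : realType) N J : (0 < N)%N -> (0 < J)%N ->
  \rank (Amx R N J) = ((N - 1) * (J - 1))%N.
Proof. case: N => // n; case: J => // m _ _; rewrite !subn1 /=; exact: rankA. Qed.

Lemma norm_le_sum (R : realType) (T : seq R) y : y \in T -> `|y| <= \sum_(z <- T) `|z|.
Proof.
elim: T => // z T IH; rewrite in_cons big_cons => /orP[/eqP ->|/IH H].
  by rewrite lerDl sumr_ge0.
by apply: (le_trans H); rewrite lerDr.
Qed.

Theorem theorem3 (R : realType) (s : setting) (N J : nat)
    (X : 'I_N -> 'I_J -> bool) (v : 'cV[R]_(nK s X)) :
  (2 <= N)%N -> (2 <= J)%N ->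
  staggered X -> units_ordered X ->
  let F := Fmx R s X in
  let A := Amx R N J in
  [/\ (* (i) *)
      (\rank (row_mx F^T v) > \rank F^T)%N ->
        ~ (exists w : 'cV[R]_(nM N J), unbiased v w),
      (* (ii) *)
      \rank (row_mx F^T v) = \rank F^T -> \rank F^T = nM N J ->
        exists w : 'cV[R]_(nM N J),
          unbiased v w /\ forall w' : 'cV[R]_(nM N J), unbiased v w' -> w' = w
   & (* (iii) *)
      \rank (row_mx F^T v) = \rank F^T -> (\rank F^T < nM N J)%N ->
        ~ (exists S : seq 'cV[R]_(nM N J),
             forall w : 'cV[R]_(nM N J), unbiased v w -> w \in S)
        /\ exists (x0 : 'cV[R]_(N * J)) (U : 'M[R]_(N * J)),
             \rank U = ((N - 1) * (J - 1) - \rank F)%N /\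
             forall x : 'cV[R]_(N * J),
               (exists w : 'cV[R]_(nM N J), unbiased v w /\ x = A^T *m w)
               <-> ((x - x0)^T <= U)%MS].
Proof.
move=> N2 J2 _ _ F A.
have FAG : F = A *m Gmx R s X by [].
have exist_sol : \rank (row_mx F^T v) = \rank F^T -> exists w, unbiased v w.
  move=> Hr.
  have FC : (F <= col_mx F v^T)%MS.
    have {1}-> : F = row_mx 1%:M 0 *m col_mx F v^T.
      by rewrite mul_row_col mul1mx mul0mx addr0.
    exact: submxMl.
  have := (mxrank_leqif_sup FC).2.
  rewrite -[col_mx F v^T]trmxK tr_col_mx trmxK mxrank_tr Hr mxrank_tr eqxx.
  move/esym; rewrite tr_row_mx trmxK col_mx_sub submx_refl /= => /submxP[u Hu].
  by exists u^T; rewrite /unbiased -trmx_mul -Hu trmxK.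
have Ft_eq : forall w, unbiased v w -> w^T *m F = v^T.
  by move=> w; rewrite /unbiased => <-; rewrite trmx_mul trmxK.
split.
- move=> Hlt [w Hw]; move: Hlt; rewrite ltnNge => /negP; apply.
  have -> : row_mx F^T v = F^T *m row_mx 1%:M w by rewrite mul_mx_row mulmx1 Hw.
  exact: mxrankM_maxl.
- move=> Hr HM; have [w Hw] := exist_sol Hr.
  exists w; split => // w' Hw'.
  have Hfree : row_free F by rewrite /row_free -mxrank_tr HM.
  apply: trmx_inj; apply: (row_free_inj Hfree) => /=.
  by rewrite !Ft_eq.
move=> Hr HM; have [w0 Hw0] := exist_sol Hr.
split.
  have : kermx F != 0.
    by rewrite -mxrank_eq0 mxrank_ker -mxrank_tr -lt0n subn_gt0.
  move=> Knz.
  have [i Hi] : exists i, row i (kermx F) != 0.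
    case: (pickP (fun i => row i (kermx F) != 0)) => [i Hi|H0]; first by exists i.
    case/negP: Knz; apply/eqP/row_matrixP => i; rewrite row0.
    by move/negbFE/eqP: (H0 i).
  set k := (row i (kermx F))^T.
  have kF : k^T *m F = 0 by rewrite trmxK -row_mul mulmx_ker row0.
  have [c Hc] : exists c, k c 0 != 0.
    case: (pickP (fun c => k c 0 != 0)) => [c Hc|H0]; first by exists c.
    case/negP: Hi; apply/eqP; rewrite -[row i _]trmxK -/k.
    apply/matrixP => x y; rewrite (ord1 x).
    by move/negbFE/eqP: (H0 y); rewrite /k !mxE.
  case=> S HS.
  pose T := [seq (x - w0) c 0 / k c 0 | x <- S].
  pose t := 1 + \sum_(y <- T) `|y|.
  have Hunb : unbiased v (w0 + t *: k).
    rewrite /unbiased mulmxDr Hw0 -scalemxAr.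
    have -> : F^T *m k = 0 by rewrite -[k]trmxK -trmx_mul kF trmx0.
    by rewrite scaler0 addr0.
  have : t \in T.
    apply/mapP; exists (w0 + t *: k); first exact: HS.
    by rewrite addrC addKr mxE mulfK.
  move/(norm_le_sum); rewrite /t.
  have Hs : 0 <= \sum_(y <- T) `|y| by rewrite sumr_ge0.
  rewrite ger0_norm ?addr_ge0 //.
  move: Hs; set z := \sum_(_ <- _) _; move=> Hs H; clearbody z; clear -Hs H; lra.
exists (A^T *m w0), <<kermx F *m A>>%MS; split.
  rewrite genmxE.
  have := mxrank_mul_ker (kermx F) A.
  have KA : (kermx A <= kermx F)%MS.
    by rewrite sub_kermx FAG mulmxA mulmx_ker mul0mx.
  rewrite (capmx_idPr KA) !mxrank_ker.
  have h1 := rank_leq_row A.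
  have h2 : (\rank F <= \rank A)%N by rewrite FAG mxrankM_maxl.
  rewrite (rankA_gen R (ltnW N2) (ltnW J2)) in h1 h2 *.
  move: h1 h2; rewrite -/A; lia.
move=> x; rewrite genmxE; split.
  case=> w [Hw ->].
  rewrite -mulmxBr trmx_mul trmxK submxMr //.
  by rewrite sub_kermx raddfB /= mulmxBl !Ft_eq // subrr.
case/submxP=> u Hu.
exists (w0 + (u *m kermx F)^T); split.
  rewrite /unbiased mulmxDr Hw0.
  have -> : F^T *m (u *m kermx F)^T = 0.
    by rewrite -trmx_mul -mulmxA mulmx_ker mulmx0 trmx0.
  by rewrite addr0.
rewrite mulmxDr -trmx_mul -mulmxA -Hu trmxK.
by rewrite addrC subrK.
Qed.
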